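(* $\log\mathrm{Time}(s)\in O(\mathrm{Space}(s))$; that is, there is a constant $c$ such that for every term $s$ that reduces to an abstraction in at least one step, $\log\mathrm{Time}(s)\le c\cdot\mathrm{Space}(s)$.
   Context: $\mathsf{L}$-terms (de Bruijn): $s::=n\mid st\mid\lambda s$, size $|n|=1+n$, $|\lambda s|=1+|s|$, $|st|=1+|s|+|t|$. Substitution $k^k_u=u$, $n^k_u=n$ ($n\ne k$), $(st)^k_u=(s^k_u)(t^k_u)$, $(\lambda s)^k_u=\lambda(s^{k+1}_u)$. Reduction (deterministic): $(\lambda s)(\lambda t)\succ s^0_{\lambda t}$; $s\succ s'\Rightarrow st\succ s't$; $t\succ t'\Rightarrow(\lambda s)t\succ(\lambda s)t'$. If $s=s_0\succ\cdots\succ s_j$ with $s_j$ an abstraction, then $\mathrm{Time}(s)=j$ and $\mathrm{Space}(s)=\max_i|s_i|$. *)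

(* Defs.v *)
From Stdlib Require Import Arith Reals.

Inductive term : Type :=
| var : nat -> term
| app : term -> term -> term
| lam : term -> term.

Fixpoint size (s : term) : nat :=
  match s with
  | var n => 1 + n
  | app s t => 1 + size s + size t
  | lam s => 1 + size s
  end.

Fixpoint subst (s : term) (k : nat) (u : term) : term :=
  match s with
  | var n => if Nat.eqb n k then u else var n
  | app s t => app (subst s k u) (subst t k u)
  | lam s => lam (subst s (S k) u)
  end.

Inductive step : term -> term -> Prop :=
| stepBeta s t : step (app (lam s) (lam t)) (subst s 0 (lam t))
| stepAppL s s' t : step s s' -> step (app s t) (app s' t)
| stepAppR s t t' : step t t' -> step (app (lam s) t) (app (lam s) t').

Definition is_abstraction (t : term) : Prop :=
  exists u, t = lam u.

Inductive red_space : term -> nat -> term -> nat -> Prop :=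
| rs_refl s : red_space s 0 s (size s)
| rs_step s s' j t m :
    step s s' -> red_space s' j t m ->
    red_space s (S j) t (Nat.max (size s) m).

Definition time_space (s : term) (j m : nat) : Prop :=
  exists t, red_space s j t m /\ is_abstraction t.

(* Main.v *)
Require Import Defs.
From Stdlib Require Import Reals.
From Stdlib Require Import Lia Lra List Arith FinFun.
Import ListNotations.
Open Scope R_scope.

Inductive stepn : nat -> term -> term -> Prop :=
| sn0 s : stepn 0 s s
| snS n s s' t : step s s' -> stepn n s' t -> stepn (S n) s t.

Lemma lam_nostep u x : step (lam u) x -> False.
Proof. intro H; inversion H. Qed.

Lemma step_det s a b : step s a -> step s b -> a = b.
Proof.
  intro H; revert b; induction H; intros b Hb; inversion Hb; subst;
    try reflexivity; try (exfalso; eapply lam_nostep; eauto; fail);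
    try (f_equal; auto; fail);
    match goal with H : step (lam _) _ |- _ => inversion H end.
Qed.

Lemma stepn_trans a x y b z : stepn a x y -> stepn b y z -> stepn (a+b) x z.
Proof. induction 1; intros; simpl; [assumption| econstructor; eauto]. Qed.

Lemma stepn_det a s x : stepn a s x -> forall b y, stepn b s y -> (a <= b)%nat -> stepn (b-a) x y.
Proof.
  induction 1; intros b y Hb Hle.
  - replace (b-0)%nat with b by lia; exact Hb.
  - inversion Hb; subst; [lia|].
    assert (s' = s'0) by (eapply step_det; eauto). subst.
    simpl. apply IHstepn; auto; lia.
Qed.

Lemma cycle p s : stepn p s s -> forall q, stepn (q*p) s s.
Proof.
  intros H q; induction q; simpl; [constructor|].
  apply stepn_trans with s; auto.
Qed.

Lemma no_cycle p s n u : stepn p s s -> (1 <= p)%nat -> stepn n s (lam u) -> False.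
Proof.
  intros Hc Hp Hn.
  pose proof (cycle p s Hc (S n)) as H.
  pose proof (stepn_det _ _ _ Hn _ _ H) as H2.
  assert (Hle : (n <= S n * p)%nat) by nia.
  specialize (H2 Hle).
  inversion H2; subst. nia. eapply lam_nostep; eauto.
Qed.

Lemma rs_stepn s j t m : red_space s j t m -> stepn j s t.
Proof. induction 1; econstructor; eauto. Qed.

Lemma rs_size s j t m : red_space s j t m -> (size s <= m)%nat.
Proof. induction 1; lia. Qed.

Lemma trace s j t m : red_space s j t m -> forall u, t = lam u ->
  exists l, length l = S j /\ NoDup l /\
    (forall x, In x l -> (size x <= m)%nat /\ exists k, stepn k s x).
Proof.
  induction 1; intros u Hu; subst.
  - exists [lam u]; split; [reflexivity|split].
    + constructor; [intros []|constructor].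
    + intros x [<-|[]]; split; [lia| exists 0%nat; constructor].
  - destruct (IHred_space u eq_refl) as [l [Hl [Hnd Hx]]].
    exists (s :: l); split; [simpl; lia|split].
    + constructor; auto. intro Hin.
      destruct (Hx s Hin) as [_ [k Hk]].
      apply (no_cycle (S k) s (S j) u); [econstructor; eauto|lia|].
      econstructor; eauto. eapply rs_stepn; eauto.
    + intros x [<-|Hin]; [split; [lia|exists 0%nat; constructor]|].
      destruct (Hx x Hin) as [Hs [k Hk]]; split; [lia|].
      exists (S k); econstructor; eauto.
Qed.

Fixpoint code (s : term) : list bool :=
  match s with
  | var n => false :: false :: repeat true n ++ [false]
  | lam s => false :: true :: code s
  | Defs.app s t => true :: code s ++ code t
  end.

Lemma rep_inj n n' r r' : repeat true n ++ false :: r = repeat true n' ++ false :: r' -> n = n' /\ r = r'.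
Proof.
  revert n'; induction n; intros [|n'] H; simpl in H; inversion H; subst; auto.
  destruct (IHn n' H1); subst; auto.
Qed.

Lemma code_pf s : forall s' r r', code s ++ r = code s' ++ r' -> s = s' /\ r = r'.
Proof.
  induction s; intros [n'|a b|a] r r' H; simpl in H; try discriminate H.
  - injection H as H. rewrite <- !app_assoc in H; simpl in H.
    destruct (rep_inj _ _ _ _ H); subst; auto.
  - injection H as H. rewrite <- !app_assoc in H.
    destruct (IHs1 _ _ _ H); subst. destruct (IHs2 _ _ _ H1); subst; auto.
  - injection H as H. destruct (IHs _ _ _ H); subst; auto.
Qed.

Lemma code_inj s s' : code s = code s' -> s = s'.
Proof. intro H. apply (code_pf s s' [] []). rewrite !app_nil_r; auto. Qed.

Lemma code_len s : (length (code s) <= 3 * size s)%nat.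
Proof.
  induction s; simpl; rewrite ?length_app, ?repeat_length; simpl; lia.
Qed.

Fixpoint all_upto (L : nat) : list (list bool) :=
  match L with
  | 0 => [[]]
  | S L => [] :: map (cons true) (all_upto L) ++ map (cons false) (all_upto L)
  end.

Lemma all_upto_len L : (S (length (all_upto L)) <= 2 ^ (S L))%nat.
Proof. induction L; simpl in *; rewrite ?length_app, ?length_map; lia. Qed.

Lemma all_upto_in L x : (length x <= L)%nat -> In x (all_upto L).
Proof.
  revert x; induction L; intros [|b x] H; simpl in *; try lia; auto.
  right. apply in_or_app. destruct b; [left|right]; apply in_map; apply IHL; lia.
Qed.

Theorem theorem21 :
  exists c : R, forall (s : term) (j m : nat),
    time_space s j m -> (1 <= j)%nat ->
    ln (INR j) <= c * INR m.
Proof.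
  exists (4 * ln 2). intros s j m [t [Hr [u Hu]]] Hj.
  destruct (trace _ _ _ _ Hr u Hu) as [l [Hl [Hnd Hx]]].
  assert (Hm : (1 <= m)%nat) by (pose proof (rs_size _ _ _ _ Hr); destruct s; simpl in *; lia).
  assert (Hcnt : (S j <= 2 ^ (S (3*m)))%nat).
  { rewrite <- Hl. rewrite <- (length_map code l).
    eapply Nat.le_trans; [|apply all_upto_len]. apply le_S.
    apply NoDup_incl_length.
    - apply Injective_map_NoDup; auto. intros a b; apply code_inj.
    - intros y Hy. apply in_map_iff in Hy. destruct Hy as [x [<- Hin]].
      apply all_upto_in. destruct (Hx x Hin) as [Hs _].
      pose proof (code_len x). lia. }
  assert (H2 : 0 < ln 2) by (rewrite <- ln_1; apply ln_increasing; lra).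
  apply Rle_trans with (ln (INR (2 ^ S (3*m)))).
  - assert (Hj0 : 0 < INR j) by (apply lt_0_INR; lia).
    assert (Hle : INR j <= INR (2 ^ S (3*m))) by (apply le_INR; lia).
    destruct (Rle_lt_or_eq_dec _ _ Hle) as [Hlt|Heq].
    + left; apply ln_increasing; auto.
    + rewrite Heq; right; reflexivity.
  - rewrite pow_INR, ln_pow by (simpl; lra).
    replace (INR 2) with 2 by (simpl; lra).
    rewrite Rmult_comm, (Rmult_comm 4), Rmult_assoc.
    apply Rmult_le_compat_l; [lra|].
    replace 4 with (INR 4) by (simpl; lra). rewrite <- mult_INR. apply le_INR; lia.
Qed.
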